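(* For any hypothesis class $\mathcal{H}\subseteq\{0,1\}^{\mathcal{X}}$ and time horizon $T$, $$\inf_{\mathcal{A}}\operatorname{M}_{\mathcal{A}}(T,\mathcal{H}) \ge \frac{1}{8}\sup_{w\in\mathbb{N}}\sqrt{\min\{w,\operatorname{L}(\mathcal{H}),T\}\,\min\{\operatorname{AL}_w(\mathcal{H}),T\}},$$ where the infimum is over all (possibly randomized) online learners operating under apple tasting feedback.
   Context: Online binary classification: over rounds $t=1,\dots,T$, an adversary picks $(x_t,y_t)\in\mathcal{X}\times\{0,1\}$ and reveals $x_t$; the learner $\mathcal{A}$ (possibly randomized) outputs $\hat y_t=\mathcal{A}(x_t)\in\{0,1\}$ based on the history; under apple tasting feedback the learner observes $y_t$ only if $\hat y_t=1$. $\operatorname{M}_{\mathcal{A}}(T,\mathcal{H}) := \sup_{h\in\mathcal{H}}\sup_{x_1,\dots,x_T}\mathbb{E}\bigl[\sum_{t=1}^T \mathbb{1}\{\mathcal{A}(x_t)\neq h(x_t)\}\bigr]$ (labels $y_t=h(x_t)$, expectation over the learner's randomness). AL tree of width $w\in\mathbb{N}=\{1,2,\dots\}$ and depth $d$: a binary string $u$ is an internal node if $|u|<d$ and $u$ has fewer than $w$ ones; the tree assigns $x_u\in\mathcal{X}$ to each internal node. A path is a binary string $\sigma$ whose proper prefixes are all internal nodes but which is not itself one. The tree is shattered by $\mathcal{H}$ if for every path $\sigma$ some $h\in\mathcal{H}$ satisfies $h(x_{(\sigma_1,\dots,\sigma_{i-1})})=\sigma_i$ for all $i\le|\sigma|$.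 When $w\ge d$ it is a complete binary (Littlestone) tree. $\operatorname{L}(\mathcal{H})$ is the largest $d$ such that a complete binary tree of depth $d$ is shattered ($\infty$ if unbounded). $\operatorname{AL}_w(\mathcal{H})$ is the largest $d$ such that an AL tree of width $w$ and depth $d$ is shattered ($\infty$ if unbounded, $0$ if none). *)

(* Defs.v *)
From HB Require Import structures.
From mathcomp Require Import all_boot all_order all_algebra.
From mathcomp Require Import boolp classical_sets reals.
Set Implicit Arguments. Unset Strict Implicit. Unset Printing Implicit Defensive.
Import Order.TTheory GRing.Theory Num.Theory.
Local Open Scope classical_set_scope.
Local Open Scope ring_scope.

(* One round of observed history: the instance x_t, the learner's prediction
   yhat_t, and the feedback (Some y_t if yhat_t = 1, None otherwise). *)
Definition round_obs (X : Type) := (X * bool * option bool)%type.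

(* A (possibly randomized) learner, as a behavioural strategy: given the
   observed history and the current instance x_t, it returns the probability
   of predicting 1. *)
Definition learner (X : Type) (R : realType) := seq (round_obs X) -> X -> R.

Definition valid_learner (X : Type) (R : realType) (A : learner X R) : Prop :=
  forall hist x, 0 <= A hist x <= 1.

Fixpoint exp_mistakes (X : Type) (R : realType) (A : learner X R)
    (h : X -> bool) (hist : seq (round_obs X)) (xs : seq X) : R :=
  match xs with
  | [::] => 0
  | x :: xs' =>
      let p := A hist x in
      p * ((h x != true)%:R
           + exp_mistakes A h (rcons hist (x, true, Some (h x))) xs')
      + (1 - p) * ((h x != false)%:R
           + exp_mistakes A h (rcons hist (x, false, None)) xs')
  end.

Definition Mistakes (X : Type) (R : realType) (A : learner X R) (T : nat)
    (H : set (X -> bool)) : R :=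
  sup [set r | exists h xs, H h /\ size xs = T /\ r = exp_mistakes A h [::] xs].

(* binary string u is an internal node of an AL tree of width w, depth d *)
Definition internal (w d : nat) (u : seq bool) : bool :=
  (size u < d)%N && (count id u < w)%N.

Definition is_path (w d : nat) (sigma : seq bool) : Prop :=
  (forall i, (i < size sigma)%N -> internal w d (take i sigma))
  /\ ~~ internal w d sigma.

(* a tree assigns an instance to every node (only internal ones matter) *)
Definition shattered (X : Type) (H : set (X -> bool)) (w d : nat)
    (tree : seq bool -> X) : Prop :=
  forall sigma, is_path w d sigma ->
    exists h, H h /\
      forall i, (i < size sigma)%N -> h (tree (take i sigma)) = nth false sigma i.

(* "largest d such that P d": None stands for infinity (unbounded),
   Some 0 if there is no such d. *)
Definition largest (P : nat -> Prop) : option nat :=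
  if `[< exists B, forall d, P d -> (d <= B)%N >]
  then Some (xget 0%N [set d | P d /\ forall d', P d' -> (d' <= d)%N])
  else None.

(* Littlestone dimension: complete binary trees are AL trees of width w >= d;
   we take w = d. *)
Definition Ldim (X : Type) (H : set (X -> bool)) : option nat :=
  largest (fun d => exists tree, shattered H d d tree).

Definition ALdim (X : Type) (H : set (X -> bool)) (w : nat) : option nat :=
  largest (fun d => exists tree, shattered H w d tree).

Definition ominn (n : nat) (o : option nat) : nat :=
  if o is Some d then minn n d else n.

(* Main.v *)
Require Import Defs.
From HB Require Import structures.
From mathcomp Require Import all_boot all_order all_algebra.
From mathcomp Require Import boolp classical_sets reals.
From mathcomp Require Import ring lra zify.
Import Order.TTheory GRing.Theory Num.Theory.
Local Open Scope classical_set_scope.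
Local Open Scope ring_scope.
Set Implicit Arguments. Unset Strict Implicit. Unset Printing Implicit Defensive.

Inductive radv (X : Type) (R : realType) :=
| Leaf of (X -> bool) & seq X
| Det of X & bool & radv X R
| Mix of R & radv X R & radv X R.

Fixpoint Val (X : Type) (R : realType) (A : learner X R)
   (hist : seq (round_obs X)) (a : radv X R) : R :=
  match a with
  | Leaf h xs => exp_mistakes A h hist xs
  | Det x y a' => A hist x * ((y != true)%:R + Val A (rcons hist (x, true, Some y)) a')
       + (1 - A hist x) * ((y != false)%:R + Val A (rcons hist (x, false, None)) a')
  | Mix p a0 a1 => p * Val A hist a1 + (1 - p) * Val A hist a0
  end.

Fixpoint leaves (X : Type) (R : realType) (a : radv X R)
   : seq (R * ((X -> bool) * seq X)) :=
  match a with
  | Leaf h xs => [:: (1, (h, xs))]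
  | Det x y a' => [seq (l.1, (l.2.1, x :: l.2.2)) | l <- leaves a']
  | Mix p a0 a1 => [seq (p * l.1, l.2) | l <- leaves a1]
                   ++ [seq ((1 - p) * l.1, l.2) | l <- leaves a0]
  end.

Fixpoint allp (T : Type) (P : T -> Prop) (s : seq T) : Prop :=
  match s with [::] => True | a :: s' => P a /\ allp P s' end.

Lemma allp_cat T (P : T -> Prop) s1 s2 : allp P (s1 ++ s2) <-> allp P s1 /\ allp P s2.
Proof. elim: s1 => [|a s IH] /=; first by tauto. rewrite IH; tauto. Qed.

Lemma allp_map T U (f : T -> U) (P : U -> Prop) s : allp P (map f s) <-> allp (fun x => P (f x)) s.
Proof. elim: s => [|a s IH] //=; rewrite IH; tauto. Qed.

Lemma allp_impl T (P Q : T -> Prop) s : (forall x, P x -> Q x) -> allp P s -> allp Q s.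
Proof. move=> PQ; elim: s => [|a s IH] //= [Pa Ps]; split; auto. Qed.

Lemma allp_and T (P Q : T -> Prop) s : allp P s -> allp Q s -> allp (fun x => P x /\ Q x) s.
Proof. elim: s => [|a s IH] //= [? ?] [? ?]; split; auto. Qed.

Fixpoint consistent (X : Type) (R : realType) (a : radv X R) : Prop :=
  match a with
  | Leaf _ _ => True
  | Det x y a' => allp (fun l => l.2.1 x = y) (leaves a') /\ consistent a'
  | Mix p a0 a1 => 0 <= p <= 1 /\ consistent a0 /\ consistent a1
  end.

Lemma sumw X R (a : radv X R) : consistent a -> \sum_(l <- leaves a) l.1 = 1.
Proof.
elim: a => [h xs|x y a IH|p a0 IH0 a1 IH1] /=.
- by rewrite big_cons big_nil addr0.
- by move=> [_ c]; rewrite big_map /= IH.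
- move=> [_ [c0 c1]]; rewrite big_cat !big_map /= -!mulr_sumr IH0 // IH1 //.
  by rewrite !mulr1 addrC subrK.
Qed.

Lemma w_ge0 X R (a : radv X R) : consistent a -> allp (fun l => 0 <= l.1) (leaves a).
Proof.
elim: a => [h xs|x y a IH|p a0 IH0 a1 IH1] /=.
- by split.
- by move=> [_ c]; apply/allp_map; apply: allp_impl (IH c).
- move=> [/andP[p0 p1] [c0 c1]]; apply/allp_cat; split; apply/allp_map.
  + by apply: allp_impl (IH1 c1) => l /= l0; apply: mulr_ge0.
  + by apply: allp_impl (IH0 c0) => l /= l0; apply: mulr_ge0 => //; rewrite subr_ge0.
Qed.

Lemma eq_big_allp (V : nmodType) T (P : T -> Prop) (s : seq T) (F G : T -> V) :
  allp P s -> (forall x, P x -> F x = G x) ->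
  \sum_(x <- s) F x = \sum_(x <- s) G x.
Proof.
move=> + FG; elim: s => [|a s IH] /=; first by rewrite !big_nil.
by move=> [Pa Ps]; rewrite !big_cons FG // IH.
Qed.

Lemma Val_sum X R (A : learner X R) (a : radv X R) : consistent a ->
  forall hist, Val A hist a = \sum_(l <- leaves a) l.1 * exp_mistakes A l.2.1 hist l.2.2.
Proof.
elim: a => [h xs|x y a IH|p a0 IH0 a1 IH1] /=.
- by move=> _ hist; rewrite big_cons big_nil addr0 mul1r.
- move=> [ca c] hist; rewrite big_map /=.
  rewrite (eq_big_allp (G := fun l => A hist x * (l.1 * ((y != true)%:R
       + exp_mistakes A l.2.1 (rcons hist (x, true, Some y)) l.2.2))
     + (1 - A hist x) * (l.1 * ((y != false)%:R
       + exp_mistakes A l.2.1 (rcons hist (x, false, None)) l.2.2))) ca); last first.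
    by move=> l /= ->; ring.
  rewrite big_split /= -!mulr_sumr !IH //.
  by congr (_ * _ + _ * _); under [RHS]eq_bigr do rewrite mulrDr;
    rewrite big_split /= -mulr_suml sumw // mul1r.
- move=> [_ [c0 c1]] hist; rewrite big_cat !big_map /= IH0 // IH1 //.
  by rewrite !mulr_sumr; congr (_ + _); apply: eq_bigr => l _; rewrite mulrA.
Qed.


Lemma exists_ge (R : realType) T (s : seq (R * T)) (f : T -> R) (Q : R * T -> Prop) :
  allp Q s -> allp (fun l => 0 <= l.1) s -> s <> [::] ->
  exists l, Q l /\ \sum_(l <- s) l.1 * f l.2 <= (\sum_(l <- s) l.1) * f l.2.
Proof.
elim: s => [|a s IH] //= [Qa Qs] [a0 s0] _.
case: s IH Qs s0 => [|b s] IH Qs s0.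
  by exists a; split => //; rewrite !big_cons !big_nil !addr0.
have [l [Ql Hl]] := IH Qs s0 ltac:(by []).
have W0 : 0 <= \sum_(l <- b :: s) l.1.
  elim: (b :: s) s0 {IH Hl Qs} => [|c t IHt] /=; first by rewrite big_nil.
  by move=> [c0 t0]; rewrite big_cons addr_ge0 // IHt.
case: (lerP (f a.2) (f l.2)) => fal.
- exists l; split => //; rewrite [X in X <= _]big_cons [X in _ <= X * _]big_cons.
  have := ler_wpM2l a0 fal. lra.
- exists a; split => //; rewrite [X in X <= _]big_cons [X in _ <= X * _]big_cons.
  have := ler_wpM2l W0 (ltW fal). lra.
Qed.

Lemma leaves_nonnil X R (a : radv X R) : leaves a <> [::].
Proof.
elim: a => [h xs|x y a IH|p a0 IH0 a1 IH1] //=.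
- by case: (leaves a) IH.
- by case: (leaves a1) IH1.
Qed.

Lemma exp_bounds X R (A : learner X R) (vA : valid_learner A) h xs :
  forall hist, 0 <= exp_mistakes A h hist xs <= (size xs)%:R.
Proof.
elim: xs => [|x xs IH] hist /=; first by rewrite lexx.
have /andP[q0 q1] := vA hist x.
have /andP[e1 f1] := IH (rcons hist (x, true, Some (h x))).
have /andP[e0 f0] := IH (rcons hist (x, false, None)).
have b1 : 0 <= ((h x != true)%:R : R) <= 1 by case: (h x); rewrite /= ?mulr0n ?mulr1n; lra.
have b0 : 0 <= ((h x != false)%:R : R) <= 1 by case: (h x); rewrite /= ?mulr0n ?mulr1n; lra.
rewrite -addn1 natrD.
move: b1 b0 => /andP[? ?] /andP[? ?].
apply/andP; split; nra.
Qed.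

Lemma Val_iter_ge X R (A : learner X R) (vA : valid_learner A) x y r B :
  (forall h, B <= Val A h r) -> forall n h, B <= Val A h (iter n (Det x y) r).
Proof.
move=> Hr; elim=> [|n IH] hist //=.
have /andP[q0 q1] := vA hist x.
have := IH (rcons hist (x, true, Some y)).
have := IH (rcons hist (x, false, None)).
have b1 : 0 <= ((y != true)%:R : R) by clear; case: y; rewrite /= ?mulr0n ?mulr1n; lra.
have b0 : 0 <= ((y != false)%:R : R) by clear; case: y; rewrite /= ?mulr0n ?mulr1n; lra.
nra.
Qed.

Lemma block_lb X R (A : learner X R) (vA : valid_learner A) x p r0 r1 B0 B1 :
  0 <= p <= 1 -> (forall h, B0 <= Val A h r0) -> (forall h, B1 <= Val A h r1) ->
  forall n c hist, c <= n%:R * p -> c <= 1 - p ->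
  p * B1 + (1 - p) * B0 + c <=
  p * Val A hist (iter n (Det x true) r1) + (1 - p) * Val A hist (iter n (Det x false) r0).
Proof.
move=> /andP[p0 p1] H0 H1; elim=> [|n IH] c hist cn cp.
  rewrite /= mul0r in cn.
  have := H0 hist; have := H1 hist. nra.
rewrite [iter _ _ r1]/= [iter _ _ r0]/= /=.
have /andP[q0 q1] := vA hist x.
set hs1 := rcons hist (x, true, Some true).
set hs0 := rcons hist (x, true, Some false).
set hn := rcons hist (x, false, None).
have := IH (c - p) hn.
have A1 := Val_iter_ge vA x true H1 n hs1.
have A0 := Val_iter_ge vA x false H0 n hs0.
rewrite -addn1 natrD in cn.
move=> /(_ ltac:(lra) ltac:(lra)) I.
rewrite /=.
move: A1 A0 I q0 q1; set q := A hist x; set V1 := Val A hs1 _; set V0 := Val A hs0 _.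
set W1 := Val A hn (iter n (Det x true) r1); set W0 := Val A hn (iter n (Det x false) r0).
move=> A1 A0 I q0 q1.
have h1 : 0 <= q * (p * (V1 - B1) + (1 - p) * (V0 - B0) + (1 - p) - c).
  apply: mulr_ge0 => //; nra.
have h2 : 0 <= (1 - q) * (p * W1 + (1 - p) * W0 - (p * B1 + (1 - p) * B0 + (c - p))).
  apply: mulr_ge0; lra.
rewrite !add0r; nra.
Qed.

Lemma realize X (H : set (X -> bool)) w d tree : shattered H w d tree ->
  forall sigma, (forall i, (i < size sigma)%N -> internal w d (take i sigma)) ->
  exists h, H h /\ forall i, (i < size sigma)%N -> h (tree (take i sigma)) = nth false sigma i.
Proof.
move=> sh.
suff: forall N sigma, (d - size sigma <= N)%N ->
  (forall i, (i < size sigma)%N -> internal w d (take i sigma)) ->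
  exists h, H h /\ forall i, (i < size sigma)%N -> h (tree (take i sigma)) = nth false sigma i.
  by move=> S sigma; apply: (S _ sigma (leqnn _)).
elim=> [|N IH] sigma hN pre.
- case Hi: (internal w d sigma).
    by move: Hi; rewrite /internal; move/andP=> [+ _]; lia.
  by apply: sh; split => //; rewrite Hi.
- case Hi: (internal w d sigma); last by apply: sh; split => //; rewrite Hi.
  have [h [Hh ag]] := IH (rcons sigma false) ltac:(move: Hi; rewrite /internal size_rcons; move/andP=> [+ _]; lia)
    ltac:(move=> i; rewrite size_rcons ltnS leq_eqVlt => /orP[/eqP ->|lti];
      rewrite -cats1 ?takel_cat ?take_size //; [exact: pre | exact: ltnW]).
  exists h; split => // i lti.
  have := ag i ltac:(rewrite size_rcons; exact: ltnW).
  by rewrite -cats1 takel_cat ?(ltnW lti) // nth_cat lti.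
Qed.

Definition RZ X (H : set (X -> bool)) (tree : seq bool -> X) (v : seq bool) :=
  exists h, H h /\ forall i, (i < size v)%N -> h (tree (take i v)) = nth false v i.

Definition hsel X (H : set (X -> bool)) (tree : seq bool -> X) (v : seq bool) : X -> bool :=
  match pselect (RZ H tree v) with
  | left e => proj1_sig (cid e)
  | right _ => fun _ => false
  end.

Lemma hselP X (H : set (X -> bool)) tree v : RZ H tree v ->
  H (hsel H tree v) /\ forall i, (i < size v)%N -> hsel H tree v (tree (take i v)) = nth false v i.
Proof.
rewrite /hsel; case: pselect => // e _.
by case: (cid e) => h /= [Hh ag].
Qed.

Fixpoint adv X (R : realType) (tree : seq bool -> X) (hs : seq bool -> X -> bool) (p : R) (m k T : nat)
   (n : nat) (u : seq bool) : radv X R :=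
  match n with
  | 0 => Leaf R (hs u) (nseq (T - m * size u) (tree [::]))
  | n'.+1 => if (count id u < k)%N then
       Mix p (iter m (Det (tree u) false) (adv tree hs p m k T n' (rcons u false)))
             (iter m (Det (tree u) true) (adv tree hs p m k T n' (rcons u true)))
     else Leaf R (hs u) (nseq (T - m * size u) (tree [::]))
  end.

Lemma leaves_iter X R (x : X) y (r : radv X R) m :
  leaves (iter m (Det x y) r) = [seq (l.1, (l.2.1, nseq m x ++ l.2.2)) | l <- leaves r].
Proof.
elim: m => [|m IH] /=; first by rewrite -[LHS]map_id; apply: eq_map => -[? [? ?]].
by rewrite IH -map_comp.
Qed.

Lemma consistent_iter X R (x : X) y (r : radv X R) m :
  consistent r -> allp (fun l => l.2.1 x = y) (leaves r) -> consistent (iter m (Det x y) r).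
Proof.
move=> c a; elim: m => [|m IH] //=; split => //.
by rewrite leaves_iter; apply/allp_map.
Qed.

Definition LInv X (W : Type) (hs : seq bool -> X -> bool) (m k T : nat) (n : nat) (u : seq bool)
   (l : W * ((X -> bool) * seq X)) :=
  exists v, l.2.1 = hs v /\ take (size u) v = u /\ (size u <= size v <= size u + n)%N /\
    (forall j, (size u <= j < size v)%N -> (count id (take j v) < k)%N) /\
    size l.2.2 = (m * (size v - size u) + (T - m * size v))%N.

Lemma adv_leaves X (R : realType) tree hs (p : R) m k T :
  forall n u, allp (@LInv X R hs m k T n u) (leaves (adv tree hs p m k T n u)).
Proof.
have leafcase : forall n u, allp (@LInv X R hs m k T n u)
    (leaves (Leaf R (hs u) (nseq (T - m * size u) (tree [::])))).
  move=> n u /=; split => //; exists u; rewrite take_size size_nseq; split => //.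
  split => //; split; first by rewrite leqnn leq_addr.
  by split => [j|]; [lia| rewrite subnn muln0].
elim=> [|n IH] u; first exact: leafcase.
rewrite /=; case: ifP => cu; last exact: leafcase.
rewrite /= allp_cat !allp_map !leaves_iter !allp_map.
have child : forall y, allp (@LInv X R hs m k T n (rcons u y)) (leaves (adv tree hs p m k T n (rcons u y))) by [].
split.
all: apply: allp_impl (IH (rcons u _)) => l /= [v [e [tv [sv [cv sz]]]]].
all: exists v; split => //.
all: move: tv sv cv sz; rewrite size_rcons => tv sv cv sz.
all: have tu : take (size u) v = u by
       rewrite -(take_takel _ (leqnSn (size u))) tv -cats1 takel_cat // take_size.
all: split => //; split; first by lia.
all: split; last by rewrite size_cat size_nseq sz; nia.
all: move=> j /andP[j1 j2]; case: (ltngtP j (size u)) => jj; [lia| by apply: cv; lia | by rewrite jj tu].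
Qed.

Lemma adv_consistent X (R : realType) (H : set (X -> bool)) tree (p : R) m k T D :
  0 <= p <= 1 ->
  (forall v, (size v <= D)%N -> (forall j, (j < size v)%N -> (count id (take j v) < k)%N) ->
     RZ H tree v) ->
  forall n u, (size u + n <= D)%N -> (forall j, (j < size u)%N -> (count id (take j u) < k)%N) ->
  consistent (adv tree (hsel H tree) p m k T n u).
Proof.
move=> p01 rz; elim=> [|n IH] u su pu //=.
case: ifP => cu //=; split => //.
have sub : forall y, consistent (iter m (Det (tree u) y) (adv tree (hsel H tree) p m k T n (rcons u y))).
  move=> y; apply: consistent_iter.
    apply: IH; first by rewrite size_rcons; lia.
    move=> j; rewrite size_rcons ltnS leq_eqVlt => /orP[/eqP ->|lj];
      rewrite -cats1 ?takel_cat ?take_size //; [exact: pu | exact: ltnW].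
  apply: allp_impl (adv_leaves tree (hsel H tree) p m k T n (rcons u y)).
  move=> l [v [-> [tv [sv [cv _]]]]].
  move: tv sv cv; rewrite size_rcons => tv sv cv.
  have tu : take (size u) v = u by
       rewrite -(take_takel _ (leqnSn (size u))) tv -cats1 takel_cat // take_size.
  have [_ ag] := hselP (rz v ltac:(lia) ltac:(
     move=> j lj; case: (ltngtP j (size u)) => jj;
     [ by rewrite -(take_takel _ (ltnW jj)) tu; apply: pu
     | by apply: cv; lia | by rewrite jj tu])).
  rewrite -{1}tu ag; last by lia.
  by rewrite -(nth_take _ (ltnSn (size u))) tv nth_rcons ltnn eqxx.
by split; apply: sub.
Qed.

Lemma adv_potential X (R : realType) (A : learner X R) (vA : valid_learner A) tree hs
    (p c e : R) m k T D :
  0 <= p <= 1 -> 0 <= c -> c <= m%:R * p -> c <= 1 - p -> 0 <= e ->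
  e * k%:R = c * D%:R ->
  forall n u, (n <= D)%N -> (count id u <= k)%N -> forall hist,
  c * n%:R - e * p * n%:R - e * (count id u)%:R <= Val A hist (adv tree hs p m k T n u).
Proof.
move=> /andP[p0 p1] c0 cm cp e0 ek.
have ep0 : 0 <= e * p by apply: mulr_ge0.
have leafc : forall u hist, 0 <= Val A hist (Leaf R (hs u) (nseq (T - m * size u) (tree [::]))).
  by move=> u hist; have [] := andP (exp_bounds vA (hs u) (nseq (T - m * size u) (tree [::])) hist).
elim=> [|n IH] u nD cu hist.
  apply: le_trans (leafc u hist).
  by rewrite mulr0n !mulr0 subr0 sub0r oppr_le0; apply: mulr_ge0.
rewrite [Val _ _ _]/=; case: ifP => cuk.
  have I1 := IH (rcons u true) (ltnW nD) ltac:(rewrite -cats1 count_cat /=; lia).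
  have I0 := IH (rcons u false) (ltnW nD) ltac:(rewrite -cats1 count_cat /=; lia).
  have := block_lb vA (tree u) (p := p) ltac:(by rewrite p0 p1) I0 I1 hist cm cp.
  rewrite -!cats1 !count_cat /= !addn0 !natrD.
  move=> H; apply: le_trans H; rewrite le_eqVlt; apply/orP; left; apply/eqP.
  rewrite -addn1 natrD. ring.
apply: le_trans (leafc u hist).
have ck : count id u = k by apply/eqP; rewrite eqn_leq cu leqNgt cuk.
rewrite ck ek.
have h1 : c * n.+1%:R <= c * D%:R by apply: ler_wpM2l => //; rewrite ler_nat.
have h2 : 0 <= e * p * n.+1%:R by apply: mulr_ge0.
move: h1 h2; clear; move=> h1 h2; lra.
Qed.

Lemma tree_bound X (R : realType) (A : learner X R) (vA : valid_learner A)
   (H : set (X -> bool)) wt dt tree (sh : shattered H wt dt tree) (p c : R) m k D T :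
  (0 < k)%N -> (k <= wt)%N -> (D <= dt)%N -> (m * D <= T)%N -> 0 <= p <= 1 -> 0 <= c ->
  c <= m%:R * p -> c <= 1 - p ->
  exists h xs, H h /\ size xs = T /\
    c * D%:R - (c * D%:R / k%:R) * p * D%:R <= exp_mistakes A h [::] xs.
Proof.
move=> k0 kw Dd mD p01 c0 cm cp.
have k0R : k%:R != 0 :> R by rewrite pnatr_eq0 -lt0n.
set e := c * D%:R / k%:R.
have e0 : 0 <= e by rewrite /e; apply: divr_ge0 => //; apply: mulr_ge0.
have ek : e * k%:R = c * D%:R by rewrite /e mulfVK.
have rz : forall v, (size v <= D)%N ->
    (forall j, (j < size v)%N -> (count id (take j v) < k)%N) -> RZ H tree v.
  move=> v sv pv; apply: (realize sh) => i iv; rewrite /internal size_take iv.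
  by rewrite (leq_trans iv (leq_trans sv Dd)) /= (leq_trans (pv i iv) kw).
set a := adv tree (hsel H tree) p m k T D [::].
have ca : consistent a by rewrite /a; apply: (adv_consistent m T p01 rz).
have pot := adv_potential vA tree (hsel H tree) T p01 c0 cm cp e0 ek (n := D) (u := [::]) (leqnn D)
   (leq0n k) [::].
rewrite [count _ _]/= mulr0n mulr0 subr0 -/a in pot.
have Q : allp (fun l => H l.2.1 /\ size l.2.2 = T) (leaves a).
  apply: allp_impl (adv_leaves tree (hsel H tree) p m k T D [::]).
  move=> l [v [-> [_ [sv [cv sz]]]]]; rewrite /= in sv cv sz.
  split; last by rewrite sz; nia.
  by have [] := hselP (rz v ltac:(lia) ltac:(move=> j jv; apply: cv; lia)).
have [l [[Hl sl] le]] := exists_ge (fun t => exp_mistakes A t.1 [::] t.2) Q (w_ge0 ca)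
   (@leaves_nonnil _ _ a).
rewrite sumw // mul1r -(Val_sum A ca) in le.
exists l.2.1, l.2.2; split => //; split => //.
exact: le_trans pot le.
Qed.

Lemma largest_spec (P : nat -> Prop) K n : (0 < n)%N -> (n <= ominn K (largest P))%N ->
  exists d, (n <= d)%N /\ P d.
Proof.
move=> n0; rewrite /largest; case: asboolP => [[B hB]|nb] /=.
- case: (pselect (exists d, P d)) => [[d0 Pd0]|nP].
  + have [i [Pi maxi]] : exists i, P i /\ forall j, P j -> (j <= i)%N.
      elim: B hB => [|B IH] hB.
        by exists d0; split => // j /hB; have := hB _ Pd0; lia.
      case: (pselect (P B.+1)) => PB; first by exists B.+1.
      apply: IH => j Pj; have := hB _ Pj; rewrite leq_eqVlt => /orP[/eqP E|//].
      by rewrite E in Pj.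
    have S : [set d | P d /\ forall d', P d' -> (d' <= d)%N] (xget 0%N [set d | P d /\ forall d', P d' -> (d' <= d)%N]).
      by apply: xgetPex; exists i; split.
    case: S => PS _ le; exists (xget 0%N [set d | P d /\ forall d', P d' -> (d' <= d)%N]).
    by split => //; move: le; rewrite leq_min => /andP[].
  + rewrite xgetPN; first by rewrite minn0; lia.
    by move=> d [Pd _]; apply: nP; exists d.
- move=> le; case: (pselect (exists d, (n <= d)%N /\ P d)) => // nex; exfalso; apply: nb.
  exists n => d Pd; rewrite leqNgt; apply/negP => ltnd; apply: nex; exists d; split => //.
  exact: ltnW.
Qed.

Lemma Mistakes_ge X (R : realType) (A : learner X R) (vA : valid_learner A) T H h xs :
  H h -> size xs = T -> exp_mistakes A h [::] xs <= Mistakes A T H.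
Proof.
move=> Hh sx; apply: ub_le_sup.
  exists T%:R => r [h' [xs' [_ [<- ->]]]].
  by have /andP[] := exp_bounds vA h' xs' [::].
by exists h, xs.
Qed.

Lemma Mistakes_ge0 X (R : realType) (A : learner X R) (vA : valid_learner A) T H :
  0 <= Mistakes A T H.
Proof.
have [[h [xs [Hh sx]]]|ne] := pselect (exists h (xs : seq X), H h /\ size xs = T).
  apply: le_trans (Mistakes_ge vA Hh sx).
  by have /andP[] := exp_bounds vA h xs [::].
rewrite /Mistakes sup_out // => -[[r [h [xs [Hh [sx _]]]]] _].
by apply: ne; exists h, xs.
Qed.

Lemma sqrt_le (R : realType) (x z : R) : 0 <= z -> x <= z ^+ 2 -> Num.sqrt x <= z.
Proof.
move=> z0 xz; apply: le_trans (ler_wsqrtr xz) _.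
by rewrite sqrtr_sqr ger0_norm.
Qed.

Lemma ominn_le K o : (ominn K o <= K)%N.
Proof. by case: o => [d|] //=; rewrite geq_minl. Qed.

Lemma max_exists (P : nat -> Prop) d0 B : P d0 -> (forall d, P d -> (d <= B)%N) ->
  exists i, P i /\ forall j, P j -> (j <= i)%N.
Proof.
move=> Pd0; elim: B => [|B IH] hB.
  by exists d0; split => // j /hB; have := hB _ Pd0; lia.
case: (pselect (P B.+1)) => PB; first by exists B.+1.
apply: IH => j Pj; have := hB _ Pj; rewrite leq_eqVlt => /orP[/eqP E|//].
by rewrite E in Pj.
Qed.

Lemma per_w X (R : realType) (A : learner X R) (vA : valid_learner A) (H : set (X -> bool))
  T w : (0 < w)%N ->
  Num.sqrt ((ominn (minn w T) (Ldim H))%:R * (ominn T (ALdim H w))%:R) <= 8 * Mistakes A T H.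
Proof.
move=> w0.
set a := ominn (minn w T) (Ldim H); set b := ominn T (ALdim H w).
have aT : (a <= T)%N by apply: leq_trans (ominn_le _ _) _; rewrite geq_minr.
have aw : (a <= w)%N by apply: leq_trans (ominn_le _ _) _; rewrite geq_minl.
have bT : (b <= T)%N by apply: ominn_le.
have M0 := Mistakes_ge0 vA T H.
have [a0|apos] := posnP a.
  by rewrite a0 mul0r sqrtr0; apply: mulr_ge0.
have [d [ad [tr sh]]] := @largest_spec (fun d => exists tree, shattered H d d tree) (minn w T) a apos (leqnn a).
have ar0 : (0 : R) < a%:R by rewrite ltr0n.
case: (leqP b (4 * a)) => hb.
- have [h [xs [Hh [sx le]]]] := tree_bound vA sh (p := 2^-1) (c := 2^-1) (m := 1) (k := a) (D := a) (T := T)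
     apos ad ad ltac:(by rewrite mul1n) ltac:(apply/andP; split; lra) ltac:(lra) ltac:(lra) ltac:(lra).
  have := Mistakes_ge vA Hh sx.
  have E : 2^-1 * a%:R - 2^-1 * a%:R / a%:R * 2^-1 * a%:R = a%:R / 4 :> R.
    by field; rewrite gt_eqF.
  rewrite E in le.
  move=> Mle.
  have hbR : (b%:R : R) <= 4 * a%:R by rewrite -(natrM R 4 a) ler_nat.
  apply: le_trans (_ : 8 * (a%:R / 4) <= _); last first.
    rewrite ler_pM2l //; first exact: le_trans le Mle.
  apply: sqrt_le; first by lra.
  have : a%:R * b%:R <= a%:R * (4 * a%:R) :> R by rewrite ler_pM2l.
  move=> HH; apply: (le_trans HH); rewrite le_eqVlt; apply/orP; left; apply/eqP; field => //.
- have bpos : (0 < b)%N by apply: leq_ltn_trans (leq0n _) hb.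
  have [d' [bd [tr' sh']]] := @largest_spec (fun d => exists tree, shattered H w d tree) T b bpos (leqnn b).
  have [m [Pm maxm]] := @max_exists (fun m => (a * m * m <= b)%N) 1 b ltac:(lia)
     ltac:(move=> j Pj; nia).
  have m0 : (0 < m)%N by have := maxm 1 ltac:(lia); lia.
  have bm : (b < a * m.+1 * m.+1)%N by rewrite ltnNge; apply/negP => /maxm; lia.
  set D := (b %/ m)%N.
  have Dam : (a * m <= D)%N by rewrite /D; nia.
  have mD : (m * D <= T)%N by rewrite /D mulnC; apply: leq_trans (leq_divM b m) bT.
  have Dd : (D <= d')%N by apply: leq_trans (leq_div _ _) bd.
  have Dr0 : (0 : R) < D%:R by rewrite ltr0n; nia.
  have DamR : (a%:R * m%:R : R) <= D%:R by rewrite -natrM ler_nat.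
  have m1 : (1 : R) <= m%:R by rewrite ler1n.
  have a1 : (1 : R) <= a%:R by rewrite ler1n.
  set p : R := a%:R / (2 * D%:R).
  have pE : p * (2 * D%:R) = a%:R by rewrite /p mulfVK // mulf_neq0 // ?gt_eqF // ltr0n.
  have p0 : 0 <= p by rewrite /p divr_ge0 // mulr_ge0 // ltW.
  have pc : (m%:R + 1) * p <= 1.
    have : (m%:R + 1) * p * (2 * D%:R) <= 1 * (2 * D%:R).
      rewrite -mulrA pE mul1r. nra.
    by rewrite ler_pM2r // mulr_gt0.
  have [h [xs [Hh [sx le]]]] := tree_bound vA sh' (p := p) (c := m%:R * p) (m := m) (k := a) (D := D) (T := T)
     apos aw Dd mD ltac:(apply/andP; split; nra) ltac:(nra) ltac:(lra) ltac:(nra).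
  have := Mistakes_ge vA Hh sx.
  have E : m%:R * p * D%:R - m%:R * p * D%:R / a%:R * p * D%:R = m%:R * a%:R / 4.
    by rewrite /p; field; rewrite ?gt_eqF.
  rewrite E in le.
  move=> Mle.
  have hbR : (b%:R : R) <= 4 * m%:R * m%:R * a%:R.
    rewrite -(natrM R 4 m) -!natrM ler_nat; nia.
  apply: le_trans (_ : 8 * (m%:R * a%:R / 4) <= _); last first.
    rewrite ler_pM2l //; first exact: le_trans le Mle.
  apply: sqrt_le; first by apply: mulr_ge0 => //; apply: divr_ge0 => //; apply: mulr_ge0.
  have : a%:R * b%:R <= a%:R * (4 * m%:R * m%:R * a%:R) :> R by rewrite ler_pM2l.
  move=> HH; apply: (le_trans HH); rewrite le_eqVlt; apply/orP; left; apply/eqP; field => //.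
Qed.

Theorem lemma5 (R : realType) (X : Type) (H : set (X -> bool)) (T : nat) :
  inf [set Mistakes A T H | A in [set A : learner X R | valid_learner A]]
  >= 8^-1 * sup [set Num.sqrt ((ominn (minn w T) (Ldim H))%:R
                               * (ominn T (ALdim H w))%:R)
                | w in [set w : nat | (0 < w)%N]].
Proof.
set S := [set Mistakes A T H | A in [set A : learner X R | valid_learner A]].
set RS := [set Num.sqrt ((ominn (minn w T) (Ldim H))%:R * (ominn T (ALdim H w))%:R)
                | w in [set w : nat | (0 < w)%N]].
have Sne : S !=set0.
  exists (Mistakes (fun _ _ => 0 : R) T H); exists (fun _ _ => 0 : R) => //.
  by move=> hist x /=; rewrite lexx ler01.
have key : forall r, RS r -> r <= 8 * inf S.
  move=> r [w w0 <-].
  have : 8^-1 * Num.sqrt ((ominn (minn w T) (Ldim H))%:R * (ominn T (ALdim H w))%:R) <= inf S.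
    apply: lb_le_inf Sne _ => s [A vA <-].
    have := per_w vA H T w0.
    set q := Num.sqrt _; set M := Mistakes A T H; lra.
  set q := Num.sqrt _; lra.
have : sup RS <= 8 * inf S.
  apply: ge_sup key.
  by exists (Num.sqrt ((ominn (minn 1 T) (Ldim H))%:R * (ominn T (ALdim H 1))%:R)), 1%N.
set u := sup RS; set v := inf S; lra.
Qed.
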